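(* Suppose the bounded functions $r$ and $c$ are $L_r$- and $L_c$-Lipschitz continuous, respectively, and that $f(x,u,d)$ is $L_f$-Lipschitz continuous in $x$ for all $u\in\mathcal{U}$, $d\in\mathcal{D}$. Let $L=\max(L_r,L_c)$ and $\gamma\in[0,1)$. If $L_f\gamma<1$, then the value function $V$ defined in the context is $L$-Lipschitz continuous.
   Context: Setting: States $x\in\mathbb{R}^n$; compact sets $\mathcal{U}\subseteq\mathbb{R}^m$ (controls) and $\mathcal{D}\subseteq\mathbb{R}^\ell$ (disturbances); dynamics $f:\mathbb{R}^n\times\mathcal{U}\times\mathcal{D}\to\mathbb{R}^n$. For sequences $\mathbf{u}=\{u_t\}_{t\ge0}\subset\mathcal{U}$, $\mathbf{d}=\{d_t\}_{t\ge0}\subset\mathcal{D}$, the trajectory is $\xi_x^{\mathbf{u},\mathbf{d}}(0)=x$, $\xi_x^{\mathbf{u},\mathbf{d}}(t+1)=f(\xi_x^{\mathbf{u},\mathbf{d}}(t),u_t,d_t)$ for $t\in\mathbb{Z}_+$. $r,c:\mathbb{R}^n\to\mathbb{R}$ are bounded. A map $\phi$ from control sequences to disturbance sequences is a non-anticipative strategy if whenever $u_t=\bar u_t$ for all $t\in\{0,\dots,T\}$, then $\phi(\mathbf{u})_t=\phi(\bar{\mathbf{u}})_t$ for all $t\in\{0,\dots,T\}$; $\Phi$ is the set of all such strategies. Value function: $$V(x)=\inf_{\phi\in\Phi}\ \sup_{\mathbf{u}}\ \sup_{t\in\mathbb{Z}_+}\ \min\Big\{\gamma^t r\big(\xi_x^{\mathbf{u},\phi(\mathbf{u})}(t)\big),\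 \min_{\tau=0,\dots,t}\gamma^\tau c\big(\xi_x^{\mathbf{u},\phi(\mathbf{u})}(\tau)\big)\Big\}$$ (the paper writes $\max_{\mathbf{u}}$ over control sequences). *)

(* Defs.v *)
From HB Require Import structures.
From mathcomp Require Import all_boot all_order all_algebra.
From mathcomp Require Import all_classical all_reals all_analysis.
Set Implicit Arguments. Unset Strict Implicit. Unset Printing Implicit Defensive.
Import Order.TTheory GRing.Theory Num.Theory.
Import numFieldNormedType.Exports.
Local Open Scope classical_set_scope.
Local Open Scope ring_scope.

Definition enorm {R : realType} {k : nat} (v : 'rV[R]_k) : R :=
  Num.sqrt (\sum_(i < k) (v 0 i) ^+ 2).

Fixpoint traj {R : realType} {n m l : nat}
  (f : 'rV[R]_n -> 'rV[R]_m -> 'rV[R]_l -> 'rV[R]_n)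
  (x : 'rV[R]_n) (u : nat -> 'rV[R]_m) (d : nat -> 'rV[R]_l) (t : nat)
  : 'rV[R]_n :=
  match t with
  | 0 => x
  | t'.+1 => f (traj f x u d t') (u t') (d t')
  end.

Fixpoint runmin {R : realType} (g : nat -> R) (t : nat) : R :=
  match t with
  | 0 => g 0
  | t'.+1 => Num.min (runmin g t') (g t'.+1)
  end.

Definition seq_in {R : realType} {k : nat} (S : set 'rV[R]_k)
  (s : nat -> 'rV[R]_k) : Prop := forall t, S (s t).

Definition nonanticipative {R : realType} {m l : nat}
  (U : set 'rV[R]_m) (D : set 'rV[R]_l)
  (phi : (nat -> 'rV[R]_m) -> (nat -> 'rV[R]_l)) : Prop :=
  (forall u, seq_in U u -> seq_in D (phi u)) /\
  (forall u ub, seq_in U u -> seq_in U ub -> forall T : nat,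
      (forall t, (t <= T)%N -> u t = ub t) ->
      (forall t, (t <= T)%N -> phi u t = phi ub t)).

Definition stage_payoff {R : realType} {n m l : nat}
  (f : 'rV[R]_n -> 'rV[R]_m -> 'rV[R]_l -> 'rV[R]_n)
  (r c : 'rV[R]_n -> R) (gamma : R)
  (x : 'rV[R]_n) (u : nat -> 'rV[R]_m) (d : nat -> 'rV[R]_l) (t : nat) : R :=
  Num.min (gamma ^+ t * r (traj f x u d t))
          (runmin (fun tau => gamma ^+ tau * c (traj f x u d tau)) t).

Definition value_fun {R : realType} {n m l : nat}
  (f : 'rV[R]_n -> 'rV[R]_m -> 'rV[R]_l -> 'rV[R]_n)
  (r c : 'rV[R]_n -> R) (gamma : R)
  (U : set 'rV[R]_m) (D : set 'rV[R]_l) (x : 'rV[R]_n) : R :=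
  inf [set v : R | exists phi, nonanticipative U D phi /\
        v = sup [set w : R | exists u, seq_in U u /\
              exists t : nat, w = stage_payoff f r c gamma x u (phi u) t]].

Definition bdd_real_fun {R : realType} {n : nat} (g : 'rV[R]_n -> R) : Prop :=
  exists M : R, forall x, `|g x| <= M.

Definition lipschitz_with {R : realType} {n : nat} (L : R) (g : 'rV[R]_n -> R)
  : Prop := forall x y, `|g x - g y| <= L * enorm (x - y).

(* Main.v *)
Require Import Defs.
From HB Require Import structures.
From mathcomp Require Import all_boot all_order all_algebra.
From mathcomp Require Import all_classical all_reals all_analysis.
From mathcomp Require Import lra ring.
Import Order.TTheory GRing.Theory Num.Theory.
Import numFieldNormedType.Exports.
Local Open Scope classical_set_scope.
Local Open Scope ring_scope.

Section Aux.
Variable R : realType.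

Lemma min_close (a b a' b' K : R) : `|a - a'| <= K -> `|b - b'| <= K ->
  `|Num.min a b - Num.min a' b'| <= K.
Proof.
rewrite !ler_norml => /andP[h1 h2] /andP[h3 h4].
have [hab|hab] := leP a b; have [hab'|hab'] := leP a' b'; rewrite ?ltr_norml; apply/andP; split; lra.
Qed.

Lemma runmin_close (g h : nat -> R) K : (forall t, `|g t - h t| <= K) ->
  forall t, `|runmin g t - runmin h t| <= K.
Proof.
move=> H; elim=> [|t IH] /=; first exact: H.
exact: min_close.
Qed.

Lemma runmin_lb (g : nat -> R) B : (forall t, B <= g t) -> forall t, B <= runmin g t.
Proof.
move=> H; elim=> [|t IH] /=; first exact: H.
by rewrite le_min IH H.
Qed.

Lemma sup_close (A B : set R) K : 0 <= K -> has_ubound A -> has_ubound B ->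
  (forall a, A a -> exists2 b, B b & `|a - b| <= K) ->
  (forall b, B b -> exists2 a, A a & `|a - b| <= K) ->
  `|sup A - sup B| <= K.
Proof.
move=> K0 uA uB hAB hBA.
case: (pselect (A !=set0)) => [[a0 Aa0]|nA].
- have [b0 Bb0 _] := hAB a0 Aa0.
  have h1 : sup A <= sup B + K.
    apply: ge_sup; first by exists a0.
    move=> a Aa; have [b Bb hab] := hAB a Aa.
    have := ub_le_sup uB Bb; move: hab; rewrite ler_norml => /andP[? ?]; lra.
  have h2 : sup B <= sup A + K.
    apply: ge_sup; first by exists b0.
    move=> b Bb; have [a Aa hab] := hBA b Bb.
    have := ub_le_sup uA Aa; move: hab; rewrite ler_norml => /andP[? ?]; lra.
  rewrite ler_norml; apply/andP; split; lra.
- have eA : A = set0.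
    by apply/seteqP; split=> z // Az; apply: nA; exists z.
  have eB : B = set0.
    apply/seteqP; split=> z // Bz; have [a Aa _] := hBA z Bz.
    by apply: nA; exists a.
  by rewrite eA eB sup0 subrr normr0.
Qed.

Lemma inf_close (A B : set R) K : 0 <= K -> has_lbound A -> has_lbound B ->
  (forall a, A a -> exists2 b, B b & `|a - b| <= K) ->
  (forall b, B b -> exists2 a, A a & `|a - b| <= K) ->
  `|inf A - inf B| <= K.
Proof.
move=> K0 uA uB hAB hBA.
case: (pselect (A !=set0)) => [[a0 Aa0]|nA].
- have [b0 Bb0 _] := hAB a0 Aa0.
  have h1 : inf A - K <= inf B.
    apply: lb_le_inf; first by exists b0.
    move=> b Bb; have [a Aa hab] := hBA b Bb.
    have := ge_inf uA Aa; move: hab; rewrite ler_norml => /andP[? ?]; lra.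
  have h2 : inf B - K <= inf A.
    apply: lb_le_inf; first by exists a0.
    move=> a Aa; have [b Bb hab] := hAB a Aa.
    have := ge_inf uB Bb; move: hab; rewrite ler_norml => /andP[? ?]; lra.
  rewrite ler_norml; apply/andP; split; lra.
- have eA : A = set0.
    by apply/seteqP; split=> z // Az; apply: nA; exists z.
  have eB : B = set0.
    apply/seteqP; split=> z // Bz; have [a Aa _] := hBA z Bz.
    by apply: nA; exists a.
  by rewrite eA eB inf0 subrr normr0.
Qed.

Lemma sup_ge_lb (S : set R) B : B <= 0 -> has_ubound S ->
  (forall s, S s -> B <= s) -> B <= sup S.
Proof.
move=> B0 uS H.
case: (pselect (S !=set0)) => [[s Ss]|nS].
- exact: le_trans (H s Ss) (ub_le_sup uS Ss).
- have -> : S = set0 by apply/seteqP; split=> z // Sz; apply: nS; exists z.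
  by rewrite sup0.
Qed.

Lemma enorm0 k (v : 'rV[R]_k) : enorm v = 0 -> v = 0.
Proof.
rewrite /enorm => /eqP; rewrite sqrtr_eq0 => hle.
have hs : \sum_(i < k) v 0 i ^+ 2 == 0.
  by rewrite eq_le hle /=; apply: sumr_ge0 => i _; apply: sqr_ge0.
move/eqP: hs => /psumr_eq0P h.
apply/matrixP => i j; rewrite mxE (ord1 i).
have := h (fun i _ => sqr_ge0 _) j isT => /eqP; rewrite sqrf_eq0 => /eqP ->; rewrite ?mxE //.
Qed.

End Aux.

Theorem theorem3 (R : realType) (n m l : nat)
  (U : set 'rV[R]_m) (D : set 'rV[R]_l)
  (f : 'rV[R]_n -> 'rV[R]_m -> 'rV[R]_l -> 'rV[R]_n)
  (r c : 'rV[R]_n -> R) (Lr Lc Lf gamma : R) :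
  compact U -> compact D ->
  bdd_real_fun r -> bdd_real_fun c ->
  lipschitz_with Lr r -> lipschitz_with Lc c ->
  (forall u d, U u -> D d -> forall x y,
      enorm (f x u d - f y u d) <= Lf * enorm (x - y)) ->
  0 <= gamma -> gamma < 1 ->
  Lf * gamma < 1 ->
  lipschitz_with (Num.max Lr Lc) (value_fun f r c gamma U D).
Proof.
move=> _ _ [Mr hMr] [Mc hMc] hr hc hf g0 g1 gLf x y.
set L := Num.max Lr Lc.
have enn : forall k (v : 'rV[R]_k), 0 <= enorm v by move=> k v; apply: sqrtr_ge0.
set e := enorm (x - y).
have e0 : 0 <= e := enn _ _.
have LrL : Lr <= L by rewrite /L le_max lexx.
have LcL : Lc <= L by rewrite /L le_max lexx orbT.
case: (lerP 0 L) => L0; last first.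
  have := hr x y; rewrite -/e => h.
  have h' : 0 <= Lr * e := le_trans (normr_ge0 _) h.
  have ee : e = 0 by nra.
  move/enorm0: (ee) => /eqP; rewrite subr_eq0 => /eqP exy.
  by rewrite ee mulr0 exy subrr normr0.

have K0 : 0 <= L * e by apply: mulr_ge0.
have Mr0 : 0 <= Mr := le_trans (normr_ge0 _) (hMr x).
have Mc0 : 0 <= Mc := le_trans (normr_ge0 _) (hMc x).
have key : forall u d, seq_in U u -> seq_in D d -> forall t,
    gamma ^+ t * enorm (traj f x u d t - traj f y u d t) <= e.
  move=> u d hu hd; elim=> [|t IH] /=; first by rewrite expr0 mul1r.
  have h := hf _ _ (hu t) (hd t) (traj f x u d t) (traj f y u d t).
  rewrite exprS.
  have Gt : 0 <= gamma ^+ t by apply: exprn_ge0.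
  move: IH h (enn _ (traj f x u d t - traj f y u d t)) Gt.
  generalize (enorm (traj f x u d t - traj f y u d t)) => a.
  generalize (gamma ^+ t) => G IH h a0 G0.
  apply: le_trans (_ : gamma * G * (Lf * a) <= _).
    by apply: ler_wpM2l; [exact: mulr_ge0 | exact: h].
  have X0 : 0 <= G * a := mulr_ge0 G0 a0.
  rewrite (_ : gamma * G * (Lf * a) = (Lf * gamma) * (G * a)); last by ring.
  move: IH X0; generalize (G * a) => X; nra.
have pay : forall u d, seq_in U u -> seq_in D d -> forall t,
    `|stage_payoff f r c gamma x u d t - stage_payoff f r c gamma y u d t| <= L * e.
  move=> u d hu hd.
  have one : forall (g : 'rV_n -> R) Lg, lipschitz_with Lg g -> Lg <= L -> forall t,
      `|gamma ^+ t * g (traj f x u d t) - gamma ^+ t * g (traj f y u d t)| <= L * e.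
    move=> g Lg hg hLg t.
    rewrite -mulrBr normrM (ger0_norm (exprn_ge0 t g0)).
    have Gt : 0 <= gamma ^+ t by apply: exprn_ge0.
    apply: le_trans (_ : gamma ^+ t * (L * enorm (traj f x u d t - traj f y u d t)) <= _).
      apply: ler_wpM2l => //; apply: le_trans (hg _ _) _; apply: ler_wpM2r; [exact: enn | exact: hLg].
    rewrite mulrCA; apply: ler_wpM2l => //; exact: key.
  move=> t; rewrite /stage_payoff; apply: min_close; first exact: one hr LrL t.
  by apply: runmin_close => tau; apply: one hc LcL tau.
have gb : forall (g : 'rV[R]_n -> R) (Mg : R), (forall z : 'rV[R]_n, `|g z| <= Mg) ->
    forall (t : nat) (w : 'rV[R]_n), - Mg <= gamma ^+ t * g w <= Mg.
  move=> g Mg hg t w; have := hg w; have G0 : 0 <= gamma ^+ t by apply: exprn_ge0.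
  have G1 : gamma ^+ t <= 1 by apply: exprn_ile1 => //; apply: ltW.
  move: G0 G1; generalize (gamma ^+ t) => G G0 G1.
  rewrite ler_norml => /andP[h1 h2]; apply/andP; split; nra.
have bnd : forall z u d t,
    - (Mr + Mc) <= stage_payoff f r c gamma z u d t <= Mr + Mc.
  move=> z u d t; rewrite /stage_payoff; apply/andP; split.
  - rewrite le_min; apply/andP; split.
      by case/andP: (gb r Mr hMr t (traj f z u d t)) => ? ?; lra.
    apply: runmin_lb => tau.
    by case/andP: (gb c Mc hMc tau (traj f z u d tau)) => ? ?; lra.
  - rewrite ge_min; apply/orP; left.
    by case/andP: (gb r Mr hMr t (traj f z u d t)) => ? ?; lra.
have ubz : forall z phi, has_ubound [set w : R | exists u, seq_in U u /\
      exists t : nat, w = stage_payoff f r c gamma z u (phi u) t].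
  move=> z phi; exists (Mr + Mc) => w [u [hu [t ->]]].
  by case/andP: (bnd z u (phi u) t).
have lbz : forall z, has_lbound [set v : R | exists phi, nonanticipative U D phi /\
        v = sup [set w : R | exists u, seq_in U u /\
              exists t : nat, w = stage_payoff f r c gamma z u (phi u) t]].
  move=> z; exists (- (Mr + Mc)) => v [phi [hphi ->]].
  apply: sup_ge_lb; [lra | exact: ubz |].
  move=> w [u [hu [t ->]]]; by case/andP: (bnd z u (phi u) t).
have inner : forall phi, nonanticipative U D phi ->
  `|sup [set w : R | exists u, seq_in U u /\
              exists t : nat, w = stage_payoff f r c gamma x u (phi u) t] -
    sup [set w : R | exists u, seq_in U u /\
              exists t : nat, w = stage_payoff f r c gamma y u (phi u) t]| <= L * e.
  move=> phi hphi; apply: sup_close => //.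
  - move=> w [u [hu [t ->]]].
    exists (stage_payoff f r c gamma y u (phi u) t); first by exists u; split => //; exists t.
    exact: pay hu (hphi.1 u hu) t.
  - move=> w [u [hu [t ->]]].
    exists (stage_payoff f r c gamma x u (phi u) t); first by exists u; split => //; exists t.
    exact: pay hu (hphi.1 u hu) t.
rewrite /value_fun; apply: inf_close => //.
- move=> v [phi [hphi ->]].
  eexists; first by exists phi; split; [exact: hphi | reflexivity].
  exact: inner.
- move=> v [phi [hphi ->]].
  eexists; first by exists phi; split; [exact: hphi | reflexivity].
  exact: inner.
Qed.
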